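(* Let $H$ be a Hopf algebra, flat as a $k$-module, $A$ a left $H$-comodule algebra and $B=A^{\mathrm{co}H}$. If $A$ is a separable extension of $B$, then the induction functor $H\otimes-:\mathcal M_A\to{}^H\mathcal M_A$ is separable. If $A/B$ is a Hopf Galois extension, the converse holds as well.
   Context: $k$ commutative ring; $\rho_A(a)=\sum a_{<-1>}\otimes a_{<0>}$. $A^{\mathrm{co}H}=\{a\in A:\rho_A(a)=1\otimes a\}$. ${}^H\mathcal M_A$ is the category of right $A$-modules $M$ with a left $H$-coaction such that $\rho_M(ma)=\sum m_{<-1>}a_{<-1>}\otimes m_{<0>}a_{<0>}$, with $A$-linear $H$-colinear maps. The induction functor sends $N\in\mathcal M_A$ to $H\otimes N$ with $(h\otimes n)a=\sum ha_{<-1>}\otimes na_{<0>}$ and $\rho(h\otimes n)=\sum h_{(1)}\otimes h_{(2)}\otimes n$. $A/B$ is a separable extension if there is $e=\sum e^1\otimes e^2\in A\otimes_B A$ with $\sum ae^1\otimes e^2=\sum e^1\otimes e^2a$ for all $a$ and $\sum e^1e^2=1$. $A/B$ is Hopf Galois if $A\otimes_BA\to H\otimes A$, $a\otimes b\mapsto\sum a_{<-1>}\otimes a_{<0>}b$, is bijective. A functor is separable if $\mathrm{Hom}(M,N)\to\mathrm{Hom}(FM,FN)$ has a left inverse natural in $M,N$. *)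

(* Defs.v *)
From HB Require Import structures.
From mathcomp Require Import all_boot all_algebra.
From mathcomp Require Import boolp.

Set Implicit Arguments.
Unset Strict Implicit.
Unset Printing Implicit Defensive.

Import GRing.Theory.
Local Open Scope ring_scope.

Definition klinear (k : pzRingType) (U V : lmodType k) (f : U -> V) : Prop :=
  forall (c : k) (u u' : U), f (c *: u + u') = c *: f u + f u'.

Definition kbilinear (k : pzRingType) (U V W : lmodType k) (f : U -> V -> W)
  : Prop := (forall v, klinear (fun u => f u v)) /\ (forall u, klinear (f u)).

Lemma klinear0 (k : pzRingType) (U V : lmodType k) (f : U -> V) :
  klinear f -> f 0 = 0.
Proof.
move=> hf; have := hf (-1) 0 0.
by rewrite scaler0 addr0 scaleN1r addNr.
Qed.

Lemma klinearZ (k : pzRingType) (U V : lmodType k) (f : U -> V) c u :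
  klinear f -> f (c *: u) = c *: f u.
Proof. by move=> hf; have := hf c u 0; rewrite !addr0 (klinear0 hf) addr0. Qed.

(* The tensor product U (x)_k V of two k-modules.                           *)
(* Elements are classes of finite formal sums  sum_i u_i (x) v_i  (lists of *)
(* pairs); two formal sums are identified iff every k-bilinear map agrees on *)
(* them.  This is (a construction of) the usual tensor product.             *)

Section Tensor.
Variables (k : comPzRingType) (U V : lmodType k).

Definition tsum (W : lmodType k) (f : U -> V -> W) (s : seq (U * V)) : W :=
  \sum_(p <- s) f p.1 p.2.

Definition teqv (s t : seq (U * V)) : Prop :=
  forall (W : lmodType k) (f : U -> V -> W), kbilinear f -> tsum f s = tsum f t.

Definition tensor_type := {X : seq (U * V) -> Prop | exists s, X = teqv s}.

Definition tclass (s : seq (U * V)) : tensor_type :=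
  exist _ (teqv s) (ex_intro _ s erefl).

Definition trep (x : tensor_type) : seq (U * V) := projT1 (cid (proj2_sig x)).

Lemma trep_spec x : proj1_sig x = teqv (trep x).
Proof. by rewrite /trep; case: (cid _). Qed.

Lemma tensor_eq (x y : tensor_type) : proj1_sig x = proj1_sig y -> x = y.
Proof.
case: x y => X hX [Y hY] /= e; move: hX hY; rewrite e => hX hY.
by rewrite (Prop_irrelevance hX hY).
Qed.

Lemma tclassK x : tclass (trep x) = x.
Proof. by apply: tensor_eq; rewrite /= -trep_spec. Qed.

Lemma teqv_refl s : teqv s s. Proof. by []. Qed.
Lemma teqv_sym s t : teqv s t -> teqv t s.
Proof. by move=> h W f hf; rewrite (h W f hf). Qed.
Lemma teqv_trans s t u : teqv s t -> teqv t u -> teqv s u.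
Proof. by move=> h1 h2 W f hf; rewrite (h1 W f hf) (h2 W f hf). Qed.

Lemma tclass_eq s t : teqv s t -> tclass s = tclass t.
Proof.
move=> h; apply: tensor_eq => /=.
apply/funext => u; apply/propext; split => h'.
  exact: teqv_trans (teqv_sym h) h'.
exact: teqv_trans h h'.
Qed.

Lemma teqv_rep s : teqv (trep (tclass s)) s.
Proof.
have := trep_spec (tclass s) => /= e.
by rewrite -e; apply: teqv_refl.
Qed.

Lemma tsum_cat (W : lmodType k) (f : U -> V -> W) s t : tsum f (s ++ t) = tsum f s + tsum f t.
Proof. by rewrite /tsum big_cat. Qed.

Definition negl (p : U * V) : U * V := (- p.1, p.2).
Definition scll (a : k) (p : U * V) : U * V := (a *: p.1, p.2).

Lemma tsum_negl (W : lmodType k) (f : U -> V -> W) s : kbilinear f ->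
  tsum f (map negl s) = - tsum f s.
Proof.
move=> [hl _]; rewrite /tsum big_map -sumrN; apply: eq_bigr => p _ /=.
by rewrite -scaleN1r (klinearZ _ _ (hl p.2)) scaleN1r.
Qed.

Lemma tsum_scll (W : lmodType k) (f : U -> V -> W) a s : kbilinear f ->
  tsum f (map (scll a) s) = a *: tsum f s.
Proof.
move=> [hl _]; rewrite /tsum big_map scaler_sumr; apply: eq_bigr => p _ /=.
exact: (klinearZ _ _ (hl p.2)).
Qed.

Definition tzero : tensor_type := tclass [::].
Definition tadd (x y : tensor_type) : tensor_type := tclass (trep x ++ trep y).
Definition topp (x : tensor_type) : tensor_type := tclass (map negl (trep x)).
Definition tscale (a : k) (x : tensor_type) : tensor_type :=
  tclass (map (scll a) (trep x)).

Lemma tsum_rep (W : lmodType k) (f : U -> V -> W) s : kbilinear f ->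
  tsum f (trep (tclass s)) = tsum f s.
Proof. by move=> hf; apply: teqv_rep. Qed.

Lemma tclassP (x : tensor_type) : exists s, x = tclass s.
Proof. by exists (trep x); rewrite tclassK. Qed.

Lemma taddE s t : tadd (tclass s) (tclass t) = tclass (s ++ t).
Proof. by apply: tclass_eq => W f hf; rewrite !tsum_cat !tsum_rep. Qed.

Lemma toppE s : topp (tclass s) = tclass (map negl s).
Proof. by apply: tclass_eq => W f hf; rewrite !tsum_negl ?tsum_rep. Qed.

Lemma tscaleE a s : tscale a (tclass s) = tclass (map (scll a) s).
Proof. by apply: tclass_eq => W f hf; rewrite !tsum_scll ?tsum_rep. Qed.

HB.instance Definition _ := gen_eqMixin tensor_type.
HB.instance Definition _ := gen_choiceMixin tensor_type.

Lemma taddA : associative tadd.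
Proof.
move=> x y z; case: (tclassP x) (tclassP y) (tclassP z) => [s ->] [t ->] [u ->].
by rewrite !taddE catA.
Qed.

Lemma taddC : commutative tadd.
Proof.
move=> x y; case: (tclassP x) (tclassP y) => [s ->] [t ->].
by rewrite !taddE; apply: tclass_eq => W f _; rewrite !tsum_cat addrC.
Qed.

Lemma tadd0 : left_id tzero tadd.
Proof. by move=> x; case: (tclassP x) => [s ->]; rewrite /tzero taddE. Qed.

Lemma taddN : left_inverse tzero topp tadd.
Proof.
move=> x; case: (tclassP x) => [s ->]; rewrite toppE taddE.
by apply: tclass_eq => W f hf; rewrite tsum_cat tsum_negl // addNr /tsum big_nil.
Qed.

HB.instance Definition _ := GRing.isZmodule.Build tensor_type taddA taddC tadd0 taddN.

Lemma tscaleA a b x : tscale a (tscale b x) = tscale (a * b) x.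
Proof.
case: (tclassP x) => [s ->]; rewrite !tscaleE.
by apply: tclass_eq => W f hf; rewrite !tsum_scll // scalerA.
Qed.

Lemma tscale1 : left_id 1 tscale.
Proof.
move=> x; case: (tclassP x) => [s ->]; rewrite !tscaleE.
by apply: tclass_eq => W f hf; rewrite !tsum_scll // scale1r.
Qed.

Lemma tscaleDr : right_distributive tscale tadd.
Proof.
move=> a x y; case: (tclassP x) (tclassP y) => [s ->] [t ->].
rewrite !tscaleE !taddE.
by apply: tclass_eq => W f hf; rewrite map_cat !tsum_cat !tsum_scll // !tsum_rep // scalerDr.
Qed.

Lemma tscaleDl x : {morph tscale^~ x : a b / a + b >-> tadd a b}.
Proof.
move=> a b; case: (tclassP x) => [s ->]; rewrite !tscaleE taddE.
by apply: tclass_eq => W f hf; rewrite !tsum_cat !tsum_scll // scalerDl.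
Qed.

HB.instance Definition _ :=
  GRing.Zmodule_isLmodule.Build k tensor_type tscaleA tscale1 tscaleDr tscaleDl.

Definition tt (u : U) (v : V) : tensor_type := tclass [:: (u, v)].

(* The k-linear map  U (x) V -> W  induced by a k-bilinear map f
   (meaningful only for bilinear f). *)
Definition tlift (W : lmodType k) (f : U -> V -> W) (x : tensor_type) : W :=
  tsum f (trep x).

End Tensor.


Arguments tt {k U V}.
Arguments tlift {k U V W}.

Section Hopf.
Variable k : comPzRingType.

Definition idtens (H N N' : lmodType k) (f : N -> N') :
  tensor_type H N -> tensor_type H N' :=
  tlift (fun h n => tt h (f n)).

Definition tmul (U V : algType k) (x y : tensor_type U V) : tensor_type U V :=
  tlift (fun a b => tlift (fun c d => tt (a * c) (b * d)) y) x.

Definition klinear_form (H : lmodType k) (e : H -> k) : Prop :=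
  forall c x y, e (c *: x + y) = c * e x + e y.

Definition is_hopf_algebra (H : algType k) (Delta : H -> tensor_type H H)
    (eps : H -> k) (S : H -> H) : Prop :=
  [/\ [/\ klinear Delta, klinear_form eps & klinear S],
      (* coassociativity: (Delta (x) id) Delta = (id (x) Delta) Delta *)
      (forall h, tlift (fun a b => tlift (fun c d => tt c (tt d b)) (Delta a))
                       (Delta h)
               = tlift (fun a b => tt a (Delta b)) (Delta h)),
      ((forall h, tlift (fun a b => eps a *: b) (Delta h) = h) /\
       (forall h, tlift (fun a b => eps b *: a) (Delta h) = h)),
      [/\ (forall g h, Delta (g * h) = tmul (Delta g) (Delta h)),
          Delta 1 = tt 1 1,
          (forall g h, eps (g * h) = eps g * eps h) & eps 1 = 1] &
      ((forall h, tlift (fun a b => S a * b) (Delta h) = eps h *: 1) /\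
       (forall h, tlift (fun a b => a * S b) (Delta h) = eps h *: 1))].

Definition kflat (H : lmodType k) : Prop :=
  forall (N N' : lmodType k) (f : N -> N'), klinear f -> injective f ->
    injective (idtens (H:=H) f).

Section ComoduleAlgebra.
Variables (H : algType k) (Delta : H -> tensor_type H H) (eps : H -> k).

Definition is_comodule_algebra (A : algType k) (rho : A -> tensor_type H A)
  : Prop :=
  [/\ klinear rho,
      (forall a, tlift (fun h b => tt h (rho b)) (rho a)
               = tlift (fun h b => tlift (fun h1 h2 => tt h1 (tt h2 b)) (Delta h))
                       (rho a)),
      (forall a, tlift (fun h b => eps h *: b) (rho a) = a),
      (forall a b, rho (a * b) = tmul (rho a) (rho b)) &
      rho 1 = tt 1 1].

Variables (A : algType k) (rho : A -> tensor_type H A).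

Definition coinvariant (a : A) : Prop := rho a = tt 1 a.

Definition rmod_axioms (M : lmodType k) (act : M -> A -> M) : Prop :=
  [/\ (forall a, klinear (fun m => act m a)),
      (forall m, klinear (act m)),
      (forall m a b, act (act m a) b = act m (a * b)) &
      (forall m, act m 1 = m)].

Record rmod := RMod {
  rm_car :> lmodType k;
  rm_act : rm_car -> A -> rm_car;
  rm_ax : rmod_axioms rm_act }.

Definition amod_hom (M N : rmod) (f : M -> N) : Prop :=
  klinear f /\ (forall m a, f (rm_act m a) = rm_act (f m) a).

(* the induction functor H (x) - : M_A -> ^H M_A on objects:
   (h (x) n) a = sum h a_{<-1>} (x) n a_{<0>},  rho(h (x) n) = sum h1 (x) h2 (x) n *)
Definition ind_act (M : rmod) (x : tensor_type H M) (a : A) : tensor_type H M :=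
  tlift (fun h m => tlift (fun h' a' => tt (h * h') (rm_act m a')) (rho a)) x.

Definition ind_coact (M : rmod) (x : tensor_type H M)
  : tensor_type H (tensor_type H M) :=
  tlift (fun h m => tlift (fun h1 h2 => tt h1 (tt h2 m)) (Delta h)) x.

(* morphisms in ^H M_A between induced objects H (x) M -> H (x) N:
   A-linear and H-colinear maps *)
Definition ind_hom (M N : rmod) (phi : tensor_type H M -> tensor_type H N)
  : Prop :=
  [/\ klinear phi,
      (forall x a, phi (ind_act x a) = ind_act (phi x) a) &
      (forall x, ind_coact (phi x) = idtens (H:=H) phi (ind_coact x))].

(* the induction functor H (x) - is separable: there is a family
   P_{M,N} : Hom(H(x)M, H(x)N) -> Hom(M, N), natural in M and N,
   left inverse to f |-> id (x) f *)
Definition ind_separable : Prop :=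
  exists P : forall M N : rmod, (tensor_type H M -> tensor_type H N) -> M -> N,
    [/\ (forall (M N : rmod) phi, ind_hom phi -> amod_hom (P M N phi)),
        (forall (M N : rmod) (f : M -> N), amod_hom f ->
           forall m, P M N (idtens (H:=H) f) m = f m) &
        (forall (M' M N N' : rmod) (g : M' -> M) (h : N -> N') phi,
           amod_hom g -> amod_hom h -> ind_hom phi ->
           forall m, P M' N' (fun x => idtens (H:=H) h (phi (idtens (H:=H) g x))) m
                     = h (P M N phi (g m)))].

(* A (x)_B A, presented by formal sums: two formal sums  sum a_i (x) b_i  are
   equal in A (x)_B A iff every B-balanced biadditive map agrees on them *)
Definition balanced (P : zmodType) (f : A -> A -> P) : Prop :=
  [/\ (forall x x' y, f (x + x') y = f x y + f x' y),
      (forall x y y', f x (y + y') = f x y + f x y') &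
      (forall x b y, coinvariant b -> f (x * b) y = f x (b * y))].

Definition teqvB (s t : seq (A * A)) : Prop :=
  forall (P : zmodType) (f : A -> A -> P), balanced f ->
    \sum_(p <- s) f p.1 p.2 = \sum_(p <- t) f p.1 p.2.

Definition separable_ext : Prop :=
  exists e : seq (A * A),
    (forall a, teqvB [seq (a * p.1, p.2) | p <- e] [seq (p.1, p.2 * a) | p <- e])
    /\ \sum_(p <- e) p.1 * p.2 = 1.

(* the canonical map A (x)_B A -> H (x) A, a (x) b |-> a_{<-1>} (x) a_{<0>} b,
   on formal sums *)
Definition can_map (s : seq (A * A)) : tensor_type H A :=
  \sum_(p <- s) tlift (fun h a => tt h (a * p.2)) (rho p.1).

(* A/B is Hopf Galois: the induced map on A (x)_B A is bijective *)
Definition hopf_galois : Prop :=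
  (forall s t, can_map s = can_map t -> teqvB s t) /\
  (forall x : tensor_type H A, exists s, can_map s = x).

End ComoduleAlgebra.
End Hopf.

(* Main.v *)
Require Import Defs.
From HB Require Import structures.
From mathcomp Require Import all_boot all_algebra.
From mathcomp Require Import boolp.
Set Implicit Arguments.
Unset Strict Implicit.
Unset Printing Implicit Defensive.
Import GRing.Theory.
Local Open Scope ring_scope.

Section TL.
Variables (k : comPzRingType) (U V : lmodType k).

Lemma tliftE (W : lmodType k) (f : U -> V -> W) x :
  tlift f x = \sum_(p <- trep x) f p.1 p.2.
Proof. by []. Qed.

Lemma tclass_sum (s : seq (U * V)) :
  tclass s = \sum_(p <- s) tt p.1 p.2.
Proof.
elim: s => [|p s IH]; first by rewrite big_nil.
rewrite big_cons -IH; rewrite /tt.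
change (tclass (p :: s) = tadd (tclass [:: (p.1, p.2)]) (tclass s)).
by rewrite taddE; case: p.
Qed.

Lemma tensor_decomp (x : tensor_type U V) : x = \sum_(p <- trep x) tt p.1 p.2.
Proof. by rewrite -tclass_sum tclassK. Qed.

Lemma tlift_tt_id x : tlift (@tt k U V) x = x.
Proof. by rewrite tliftE -tensor_decomp. Qed.

Lemma tt_bilin : kbilinear (@tt k U V).
Proof.
rewrite /kbilinear /klinear; split => [v|u] c u1 u2.
  change (tt (c *: u1 + u2) v = tadd (tscale c (tt u1 v)) (tt u2 v)).
  rewrite /tt tscaleE taddE; apply: tclass_eq => W f [hl hr].
  by rewrite /tsum /= !big_cons !big_nil /= !addr0 (hl v c u1 u2) (klinearZ _ _ (hl v)).
change (tt u (c *: u1 + u2) = tadd (tscale c (tt u u1)) (tt u u2)).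
rewrite /tt tscaleE taddE; apply: tclass_eq => W f [hl hr].
by rewrite /tsum /= !big_cons !big_nil /= !addr0 (hr u c u1 u2) -(klinearZ _ _ (hl u1)).
Qed.

Lemma tlift_tt (W : lmodType k) (f : U -> V -> W) u v :
  kbilinear f -> tlift f (tt u v) = f u v.
Proof.
move=> hf; rewrite /tlift (tsum_rep _ hf).
by rewrite /tsum big_cons big_nil addr0.
Qed.

Lemma tlift_lin (W : lmodType k) (f : U -> V -> W) :
  kbilinear f -> klinear (tlift f).
Proof.
move=> hf c x y.
case: (tclassP x) (tclassP y) => [s ->] [t ->].
change (tlift f (tadd (tscale c (tclass s)) (tclass t)) =
        c *: tlift f (tclass s) + tlift f (tclass t)).
rewrite tscaleE taddE /tlift !(tsum_rep _ hf) tsum_cat tsum_scll //.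
Qed.

End TL.

Section Gen.
Variable k : comPzRingType.

Lemma klinearD (U V : lmodType k) (f : U -> V) x y :
  klinear f -> f (x + y) = f x + f y.
Proof. by move=> hf; have := hf 1 x y; rewrite !scale1r. Qed.

Lemma klinear_comp (U V W : lmodType k) (f : U -> V) (g : V -> W) :
  klinear f -> klinear g -> klinear (fun x => g (f x)).
Proof. by move=> hf hg c x y; rewrite hf hg. Qed.

Lemma klinear_id (U : lmodType k) : klinear (fun x : U => x).
Proof. by []. Qed.

Lemma addmorph0 (V W : zmodType) (g : V -> W) :
  (forall a b, g (a + b) = g a + g b) -> g 0 = 0.
Proof. move=> hg; have := hg 0 0; rewrite addr0 => h.
by apply: (@addrI _ (g 0)); rewrite -h addr0. Qed.

Lemma add_sum (V W : zmodType) (g : V -> W) I (r : seq I) (F : I -> V) :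
  (forall a b, g (a + b) = g a + g b) -> g (\sum_(i <- r) F i) = \sum_(i <- r) g (F i).
Proof.
move=> hg; elim: r => [|i r IH]; first by rewrite !big_nil (addmorph0 hg).
by rewrite !big_cons hg IH.
Qed.

Variables (U V : lmodType k).

Lemma tlift_push (W W' : lmodType k) (f : U -> V -> W) (g : W -> W') x :
  (forall a b, g (a + b) = g a + g b) ->
  g (tlift f x) = tlift (fun u v => g (f u v)) x.
Proof. by move=> hg; rewrite !tliftE (add_sum _ _ hg). Qed.

Lemma tlift_pushL (W W' : lmodType k) (f : U -> V -> W) (g : W -> W') x :
  klinear g -> g (tlift f x) = tlift (fun u v => g (f u v)) x.
Proof. by move=> hg; apply: tlift_push => a b; apply: klinearD. Qed.

Lemma tlift_addf (W : lmodType k) (f g : U -> V -> W) x :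
  tlift (fun u v => f u v + g u v) x = tlift f x + tlift g x.
Proof. by rewrite !tliftE big_split. Qed.

Lemma tlift_scalef (W : lmodType k) (f : U -> V -> W) c x :
  tlift (fun u v => c *: f u v) x = c *: tlift f x.
Proof. by rewrite !tliftE scaler_sumr. Qed.

Lemma tlift_ext (W : lmodType k) (f g : U -> V -> W) x :
  (forall u v, f u v = g u v) -> tlift f x = tlift g x.
Proof. by move=> e; rewrite !tliftE; apply: eq_bigr => p _; apply: e. Qed.

Lemma tlift_fubini (U' V' W : lmodType k) (F : U -> V -> U' -> V' -> W) x y :
  tlift (fun u v => tlift (F u v) y) x = tlift (fun u' v' => tlift (fun u v => F u v u' v') x) y.
Proof. by rewrite !tliftE; under eq_bigr do rewrite tliftE; rewrite exchange_big. Qed.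

Lemma klinear_param (X W : lmodType k) (F : X -> U -> V -> W) x :
  (forall u v, klinear (fun z => F z u v)) -> klinear (fun z => tlift (F z) x).
Proof.
move=> hF c z z'; rewrite !tliftE scaler_sumr -big_split; apply: eq_bigr => p _.
exact: hF.
Qed.

Lemma tt_linl (v : V) : klinear (fun u : U => tt u v).
Proof. by case: (tt_bilin U V). Qed.
Lemma tt_linr (u : U) : klinear (fun v : V => tt u v).
Proof. by case: (tt_bilin U V). Qed.

Lemma tlift_tlift (U' V' W : lmodType k) (K : U' -> V' -> W) (L : U -> V -> tensor_type U' V') x :
  kbilinear K -> tlift K (tlift L x) = tlift (fun u v => tlift K (L u v)) x.
Proof. by move=> hK; apply: tlift_pushL; apply: tlift_lin. Qed.

End Gen.

Section TTL.
Variables (k : comPzRingType) (U V : lmodType k).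
Lemma ttDl c (u u' : U) (v : V) : tt (c *: u + u') v = c *: tt u v + tt u' v.
Proof. exact: (tt_linl v c u u'). Qed.
Lemma ttDr c (u : U) (v v' : V) : tt u (c *: v + v') = c *: tt u v + tt u v'.
Proof. exact: (tt_linr u c v v'). Qed.
Lemma ttZl c (u : U) (v : V) : tt (c *: u) v = c *: tt u v.
Proof. exact: klinearZ (tt_linl v). Qed.
Lemma ttZr c (u : U) (v : V) : tt u (c *: v) = c *: tt u v.
Proof. exact: klinearZ (tt_linr u). Qed.
Lemma ttAl (u u' : U) (v : V) : tt (u + u') v = tt u v + tt u' v.
Proof. exact: klinearD (tt_linl v). Qed.
Lemma ttAr (u : U) (v v' : V) : tt u (v + v') = tt u v + tt u v'.
Proof. exact: klinearD (tt_linr u). Qed.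
End TTL.

Section Main.
Variables (k : comPzRingType) (H : algType k)
    (Delta : H -> tensor_type H H) (eps : H -> k) (S : H -> H)
    (A : algType k) (rho : A -> tensor_type H A).

Variable eps_lin : klinear_form eps.
Variable eps_mul : forall g h, eps (g * h) = eps g * eps h.
Variable eps_one : eps 1 = 1.
Variable rho_lin : klinear rho.
Variable rho_counit : forall a, tlift (fun h b => eps h *: b) (rho a) = a.
Variable rho_mul : forall a b, rho (a * b) = tmul (rho a) (rho b).
Variable rho_one : rho 1 = tt 1 1.

Definition epsM (M : lmodType k) : tensor_type H M -> M :=
  tlift (fun h n => eps h *: n).

Lemma eps_bilin (M : lmodType k) : kbilinear (fun (h : H) (n : M) => eps h *: n).
Proof.
split => [n|h] c x y /=.
  by rewrite eps_lin scalerDl scalerA.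
by rewrite scalerDr !scalerA mulrC.
Qed.

Lemma epsM_lin M : klinear (@epsM M).
Proof. exact: tlift_lin (eps_bilin M). Qed.

Lemma epsM_tt (M : lmodType k) h (n : M) : epsM (tt h n) = eps h *: n.
Proof. exact: tlift_tt (eps_bilin M). Qed.

Section RM.
Variable M : rmod A.
Local Notation act := (@rm_act k A M).

Lemma act_linl a : klinear (fun m : M => act m a).
Proof. by case: (rm_ax M). Qed.
Lemma act_linr (m : M) : klinear (act m).
Proof. by case: (rm_ax M). Qed.
Lemma act_assoc (m : M) a b : act (act m a) b = act m (a * b).
Proof. by case: (rm_ax M). Qed.
Lemma act1 (m : M) : act m 1 = m.
Proof. by case: (rm_ax M). Qed.
Lemma actDl c (m m' : M) a : act (c *: m + m') a = c *: act m a + act m' a.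
Proof. exact: act_linl. Qed.
Lemma actDr c (m : M) a a' : act m (c *: a + a') = c *: act m a + act m a'.
Proof. exact: act_linr. Qed.
Lemma actZl c (m : M) a : act (c *: m) a = c *: act m a.
Proof. exact: klinearZ (act_linl a). Qed.
Lemma actZr c (m : M) a : act m (c *: a) = c *: act m a.
Proof. exact: klinearZ (act_linr m). Qed.
Lemma actAl (m m' : M) a : act (m + m') a = act m a + act m' a.
Proof. exact: klinearD (act_linl a). Qed.
Lemma actAr (m : M) a a' : act m (a + a') = act m a + act m a'.
Proof. exact: klinearD (act_linr m). Qed.

Lemma ind_in_bilin (h : H) (m : M) :
  kbilinear (fun (h' : H) (a' : A) => tt (h * h') (act m a')).
Proof.
split => [a'|h'] c x y /=; first by rewrite mulrDr -scalerAr ttDl.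
by rewrite actDr ttDr.
Qed.

Definition indF a (h : H) (m : M) :=
  tlift (fun h' a' => tt (h * h') (act m a')) (rho a).

Lemma indF_bilin a : kbilinear (indF a).
Proof.
split => [m|h] c x y; rewrite /indF.
  apply: (klinear_param (F := fun z h' a' => tt (z * h') (act m a'))) => h' a' c' z z' /=.
  by rewrite mulrDl -scalerAl ttDl.
apply: (klinear_param (F := fun z h' a' => tt (h * h') (act z a'))) => h' a' c' z z' /=.
by rewrite actDl ttDr.
Qed.

Lemma ind_act_tt a h (m : M) : ind_act rho (tt h m) a = indF a h m.
Proof. exact: tlift_tt (indF_bilin a). Qed.

Lemma ind_act_linx a : klinear (fun x => ind_act rho (M:=M) x a).
Proof. exact: tlift_lin (indF_bilin a). Qed.

Lemma ind_act_lina x : klinear (ind_act rho (M:=M) x).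
Proof.
apply: (klinear_param (F := fun z h m => indF z h m)) => h m c a a'.
rewrite /indF rho_lin.
exact: (tlift_lin (ind_in_bilin h m)).
Qed.


Lemma indF_tlift a (h : H) (m : M) :
  indF a h m = tlift (fun h' a' => tt (h * h') (act m a')) (rho a).
Proof. by []. Qed.

Lemma ind_actE x a : ind_act rho (M:=M) x a = tlift (indF a) x.
Proof. by []. Qed.

Lemma ind_act_assoc x a b :
  ind_act rho (ind_act rho (M:=M) x a) b = ind_act rho x (a * b).
Proof.
rewrite (ind_actE x a) (tlift_pushL _ _ (ind_act_linx b)).
rewrite (ind_actE x (a * b)); apply: tlift_ext => h m.
rewrite indF_tlift (tlift_pushL _ _ (ind_act_linx b)).
rewrite indF_tlift rho_mul /tmul (tlift_tlift _ _ (ind_in_bilin h m)).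
apply: tlift_ext => u v; rewrite ind_act_tt indF_tlift.
rewrite (tlift_tlift _ _ (ind_in_bilin h m)); apply: tlift_ext => u' v'.
by rewrite (tlift_tt _ _ (ind_in_bilin h m)) mulrA act_assoc.
Qed.

Lemma ind_act1 x : ind_act rho (M:=M) x 1 = x.
Proof.
rewrite /ind_act -{2}(tlift_tt_id x); apply: tlift_ext => h m.
by rewrite rho_one (tlift_tt _ _ (ind_in_bilin h m)) mulr1 act1.
Qed.

Lemma ind_act_coinv (n : M) b : rho b = tt 1 b -> ind_act rho (tt 1 n) b = tt 1 (act n b).
Proof.
by move=> hb; rewrite ind_act_tt indF_tlift hb (tlift_tt _ _ (ind_in_bilin 1 n)) mulr1.
Qed.

Lemma epsM_ind_act x a : epsM (ind_act rho (M:=M) x a) = act (epsM x) a.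
Proof.
rewrite /ind_act (tlift_pushL _ _ (epsM_lin (M:=M))) /epsM (tlift_pushL _ _ (act_linl a)).
apply: tlift_ext => h m.
rewrite -/(epsM _) (tlift_pushL _ _ (epsM_lin (M:=M))) actZl.
rewrite -[in RHS](rho_counit a) (tlift_pushL _ _ (act_linr m)) -tlift_scalef.
by apply: tlift_ext => u v; rewrite epsM_tt eps_mul -scalerA actZr.
Qed.

End RM.

Lemma klinD (U V : lmodType k) (f : U -> V) : klinear f -> forall x y, f (x + y) = f x + f y.
Proof. by move=> hf x y; apply: klinearD. Qed.

Lemma klinear_sum (U V : lmodType k) I (r : seq I) (F : I -> U -> V) :
  (forall i, klinear (F i)) -> klinear (fun x => \sum_(i <- r) F i x).
Proof.
move=> hF c x y; rewrite scaler_sumr -big_split; apply: eq_bigr => i _; exact: hF.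
Qed.

Section Idt.
Variables (M N : lmodType k) (f : M -> N).
Hypothesis hf : klinear f.

Lemma idt_bilin : kbilinear (fun (h : H) (n : M) => tt h (f n)).
Proof. by split => [n|h] c x y; rewrite ?ttDl // hf ttDr. Qed.

Lemma idtens_tt h n : idtens (H:=H) f (tt h n) = tt h (f n).
Proof. exact: tlift_tt idt_bilin. Qed.

Lemma idtens_lin : klinear (idtens (H:=H) f).
Proof. exact: tlift_lin idt_bilin. Qed.

Lemma epsM_idtens y : epsM (idtens (H:=H) f y) = f (epsM y).
Proof.
rewrite /idtens (tlift_pushL _ _ (epsM_lin (M:=N))) /epsM (tlift_pushL _ _ hf).
by apply: tlift_ext => h n; rewrite -/(epsM _) epsM_tt (klinearZ _ _ hf).
Qed.
End Idt.

Lemma idtens_ind_act (M N : rmod A) (f : M -> N) x a : amod_hom f ->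
  idtens (H:=H) f (ind_act rho x a) = ind_act rho (idtens (H:=H) f x) a.
Proof.
case=> hf hfa.
rewrite ind_actE (tlift_pushL _ _ (idtens_lin hf)).
rewrite [idtens _ x]/idtens (tlift_pushL _ _ (ind_act_linx a)).
apply: tlift_ext => h m; rewrite ind_act_tt !indF_tlift.
rewrite /idtens (tlift_tlift _ _ (idt_bilin hf)); apply: tlift_ext => h' a'.
by rewrite (tlift_tt _ _ (idt_bilin hf)) hfa.
Qed.

Section Dir1.
Variable e : seq (A * A).

Definition nu (M : rmod A) (m : M) : tensor_type H M :=
  \sum_(p <- e) ind_act rho (tt 1 (rm_act m p.1)) p.2.

Lemma nu_lin (M : rmod A) : klinear (@nu M).
Proof.
apply: klinear_sum => p.
apply: (klinear_comp (f := fun m : M => tt (1 : H) (rm_act m p.1))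
                     (g := fun y => ind_act rho y p.2)); last exact: ind_act_linx.
exact: (klinear_comp (act_linl (M:=M) p.1) (tt_linr (U:=H) (V:=M) 1)).
Qed.

Lemma epsM_nu (hsum : \sum_(p <- e) p.1 * p.2 = 1) (M : rmod A) (m : M) :
  epsM (nu m) = m.
Proof.
rewrite /nu (add_sum _ _ (klinD (epsM_lin (M:=M)))).
under eq_bigr do rewrite epsM_ind_act epsM_tt eps_one scale1r act_assoc.
by rewrite -(add_sum _ _ (actAr m)) hsum act1.
Qed.

Lemma nu_act (hsep : forall a, teqvB rho [seq (a * p.1, p.2) | p <- e]
                                        [seq (p.1, p.2 * a) | p <- e])
  (M : rmod A) (m : M) a : nu (rm_act m a) = ind_act rho (nu m) a.
Proof.
pose f := fun x y => ind_act rho (tt (1 : H) (rm_act m x)) y.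
have bal : balanced rho f.
  split.
  - by move=> x x' y; rewrite /f actAr ttAr (klinearD _ _ (ind_act_linx _)).
  - by move=> x y y'; rewrite /f (klinearD _ _ (ind_act_lina _)).
  - move=> x b y hb; rewrite /f -ind_act_assoc (ind_act_coinv _ hb).
    by rewrite act_assoc.
have := hsep a _ f bal; rewrite !big_map /= => h.
rewrite /nu (add_sum _ _ (klinD (ind_act_linx a))).
transitivity (\sum_(p <- e) f (a * p.1) p.2).
  by apply: eq_bigr => p _; rewrite /f act_assoc.
by rewrite h; apply: eq_bigr => p _; rewrite /f ind_act_assoc.
Qed.

Lemma nu_nat (M N : rmod A) (g : M -> N) (m : M) : amod_hom g ->
  idtens (H:=H) g (nu m) = nu (g m).
Proof.
move=> hg; case: (hg) => hl ha.
rewrite /nu (add_sum _ _ (klinD (idtens_lin hl))); apply: eq_bigr => p _.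
by rewrite idtens_ind_act // idtens_tt // ha.
Qed.
End Dir1.

Lemma dir1 : separable_ext rho -> ind_separable Delta rho.
Proof.
case=> e [hsep hsum].
exists (fun (M N : rmod A) (phi : tensor_type H M -> tensor_type H N) (m : M) =>
          epsM (phi (nu e m))).
split.
- move=> M N phi [hphi hphia hphic]; split.
    exact: (klinear_comp (nu_lin e (M:=M)) (klinear_comp hphi (epsM_lin (M:=N)))).
  by move=> m a; rewrite nu_act // hphia epsM_ind_act.
- move=> M N f [hf hfa] m.
  by rewrite epsM_idtens // epsM_nu.
- move=> M' M N N' g h phi hg [hh hha] hphi m.
  by rewrite epsM_idtens // nu_nat.
Qed.


Section Hopf2.
Variable Delta_lin : klinear Delta.
Variable S_lin : klinear S.
Variable coass : forall h, tlift (fun a b => tlift (fun c d => tt c (tt d b)) (Delta a)) (Delta h)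
               = tlift (fun a b => tt a (Delta b)) (Delta h).
Variable counitL : forall h, tlift (fun a b => eps a *: b) (Delta h) = h.
Variable counitR : forall h, tlift (fun a b => eps b *: a) (Delta h) = h.
Variable Delta_mul : forall g h, Delta (g * h) = tmul (Delta g) (Delta h).
Variable antiL : forall h, tlift (fun a b => S a * b) (Delta h) = eps h *: 1.
Variable antiR : forall h, tlift (fun a b => a * S b) (Delta h) = eps h *: 1.
Variable rho_coass : forall a, tlift (fun h b => tt h (rho b)) (rho a)
               = tlift (fun h b => tlift (fun h1 h2 => tt h1 (tt h2 b)) (Delta h)) (rho a).

Lemma hopf_coass3 (X : lmodType k) (T : H -> H -> H -> X) h :
  (forall c, kbilinear (T c)) -> (forall d b, klinear (fun c => T c d b)) ->
  tlift (fun a b => tlift (fun c d => T c d b) (Delta a)) (Delta h)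
  = tlift (fun a b => tlift (T a) (Delta b)) (Delta h).
Proof.
move=> h1 h2.
have Wb : kbilinear (fun (g : H) (y : tensor_type H H) => tlift (T g) y).
  split => [y|g]; last exact: tlift_lin.
  by apply: (klinear_param (F := fun z c' d' => T z c' d')) => u v; apply: h2.
have := congr1 (tlift (fun (g : H) (y : tensor_type H H) => tlift (T g) y)) (coass h).
rewrite !(tlift_pushL _ _ (tlift_lin Wb)) => e.
transitivity (tlift (fun a b => tlift (fun g y => tlift (T g) y)
                 (tlift (fun c d => tt c (tt d b)) (Delta a))) (Delta h)).
  apply: tlift_ext => a b; rewrite (tlift_pushL _ _ (tlift_lin Wb)).
  by apply: tlift_ext => c d; rewrite (tlift_tt _ _ Wb) (tlift_tt _ _ (h1 c)).
by rewrite e; apply: tlift_ext => a b; rewrite (tlift_tt _ _ Wb).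
Qed.

Lemma rho_coass3 (X : lmodType k) (T : H -> H -> A -> X) a :
  (forall g, kbilinear (T g)) -> (forall g' c, klinear (fun g => T g g' c)) ->
  tlift (fun g c => tlift (T g) (rho c)) (rho a)
  = tlift (fun h' a' => tlift (fun u' v' => T u' v' a') (Delta h')) (rho a).
Proof.
move=> h1 h2.
have Wb : kbilinear (fun (g : H) (y : tensor_type H A) => tlift (T g) y).
  split => [y|g]; last exact: tlift_lin.
  by apply: (klinear_param (F := fun z c' d' => T z c' d')) => u v; apply: h2.
have := congr1 (tlift (fun (g : H) (y : tensor_type H A) => tlift (T g) y)) (rho_coass a).
rewrite !(tlift_pushL _ _ (tlift_lin Wb)) => e.
transitivity (tlift (fun g c => tlift (fun g y => tlift (T g) y) (tt g (rho c))) (rho a)).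
  by apply: tlift_ext => g c; rewrite (tlift_tt _ _ Wb).
rewrite e; apply: tlift_ext => u v; rewrite (tlift_pushL _ _ (tlift_lin Wb)).
by apply: tlift_ext => c d; rewrite (tlift_tt _ _ Wb) (tlift_tt _ _ (h1 c)).
Qed.

Ltac linsimp := do 8 rewrite ?S_lin ?mulrDl ?mulrDr -?scalerAl -?scalerAr ?ttDl ?ttDr.

Definition Phi (c d b c' d' b' : H) := S (c * c') * d * d' * S b' * S b.

Lemma S_mul_Q (g h : H) :
  tlift (fun a b => tlift (fun c d => tlift (fun a' b' => tlift (fun c' d' =>
      Phi c d b c' d' b') (Delta a')) (Delta h)) (Delta a)) (Delta g)
  = tlift (fun a b => tlift (fun c d => tlift (fun a' b' => tlift (fun c' d' =>
      Phi a c d a' c' d') (Delta b')) (Delta h)) (Delta b)) (Delta g).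
Proof.
rewrite (hopf_coass3 (T := fun c d b => tlift (fun a' b' => tlift (fun c' d' =>
      Phi c d b c' d' b') (Delta a')) (Delta h))).
- apply: tlift_ext => a b; apply: tlift_ext => c d.
  rewrite (hopf_coass3 (T := fun c' d' b' => Phi a c d c' d' b')) //.
  + by move=> c'; split => [b'|d'] x u v; rewrite /Phi; linsimp.
  + by move=> d' b' x u v; rewrite /Phi; linsimp.
- move=> c; split => [b|d] x u v.
  + apply: (klinear_param (F := fun z a' b' => tlift (fun c' d' => Phi c z b c' d' b') (Delta a'))) => a' b'.
    apply: (klinear_param (F := fun z c' d' => Phi c z b c' d' b')) => c' d' y w w'.
    by rewrite /Phi; linsimp.
  + apply: (klinear_param (F := fun z a' b' => tlift (fun c' d' => Phi c d z c' d' b') (Delta a'))) => a' b'.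
    apply: (klinear_param (F := fun z c' d' => Phi c d z c' d' b')) => c' d' y w w'.
    by rewrite /Phi; linsimp.
- move=> d b x u v.
  apply: (klinear_param (F := fun z a' b' => tlift (fun c' d' => Phi z d b c' d' b') (Delta a'))) => a' b'.
  apply: (klinear_param (F := fun z c' d' => Phi z d b c' d' b')) => c' d' y w w'.
  by rewrite /Phi; linsimp.
Qed.


Lemma mulr_linl (z : H) : klinear (fun x : H => x * z).
Proof. by move=> c x y; rewrite mulrDl scalerAl. Qed.
Lemma mulr_linr (z : H) : klinear (fun x : H => z * x).
Proof. by move=> c x y; rewrite mulrDr scalerAr. Qed.

Lemma anti_bilin : kbilinear (fun x y : H => S x * y).
Proof. by split => [y|x] c u v; linsimp. Qed.

Lemma S_counit h : S h = tlift (fun a b => eps a *: S b) (Delta h).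
Proof.
rewrite -{1}(counitL h) (tlift_pushL _ _ S_lin).
by apply: tlift_ext => a b; rewrite (klinearZ _ _ S_lin).
Qed.

Lemma S_mul_Q1 (g h : H) :
  tlift (fun a b => tlift (fun c d => tlift (fun a' b' => tlift (fun c' d' =>
      Phi c d b c' d' b') (Delta a')) (Delta h)) (Delta a)) (Delta g) = S h * S g.
Proof.
rewrite [S g]S_counit (tlift_pushL _ _ (mulr_linr _)).
apply: tlift_ext => a b.
rewrite [S h]S_counit (tlift_pushL _ _ (mulr_linl _)).
rewrite tlift_fubini; apply: tlift_ext => a' b'.
transitivity (tlift (fun c d => tlift (fun c' d' => S (c * c') * (d * d')) (Delta a')) (Delta a) * S b' * S b).
  rewrite (tlift_pushL _ _ (mulr_linl _)) (tlift_pushL _ _ (mulr_linl _)).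
  apply: tlift_ext => c d.
  rewrite (tlift_pushL _ _ (mulr_linl _)) (tlift_pushL _ _ (mulr_linl _)).
  by apply: tlift_ext => c' d'; rewrite /Phi !mulrA.
have -> : tlift (fun c d => tlift (fun c' d' => S (c * c') * (d * d')) (Delta a')) (Delta a)
        = eps (a * a') *: 1.
  rewrite -antiL Delta_mul /tmul (tlift_tlift _ _ anti_bilin).
  apply: tlift_ext => c d; rewrite (tlift_tlift _ _ anti_bilin).
  by apply: tlift_ext => c' d'; rewrite (tlift_tt _ _ anti_bilin).
by rewrite eps_mul mulr_algl -scalerAl -scalerAr -scalerAl scalerA mulrC.
Qed.


Lemma S_mul_Q2 (g h : H) :
  tlift (fun a b => tlift (fun c d => tlift (fun a' b' => tlift (fun c' d' =>
      Phi a c d a' c' d') (Delta b')) (Delta h)) (Delta b)) (Delta g) = S (g * h).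
Proof.
rewrite -{2}(counitR g) (tlift_pushL _ _ (mulr_linl _)) (tlift_pushL _ _ S_lin).
apply: tlift_ext => a b.
rewrite -{2}(counitR h) (tlift_pushL _ _ (mulr_linr _)) (tlift_pushL _ _ S_lin).
rewrite tlift_fubini; apply: tlift_ext => a' b'.
transitivity (tlift (fun c d => eps b' *: (S (a * a') * (c * S d))) (Delta b)).
  apply: tlift_ext => c d.
  transitivity ((fun z => S (a * a') * c * z * S d) (tlift (fun c' d' => c' * S d') (Delta b'))).
    rewrite (tlift_pushL (fun c' d' => c' * S d') _ (g := fun z => S (a * a') * c * z * S d)).
      by apply: tlift_ext => c' d'; rewrite /Phi !mulrA.
    by move=> x u v; linsimp.
  by rewrite /= antiR -scalerAr -scalerAl mulr1 mulrA.
rewrite tlift_scalef.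
rewrite -(tlift_pushL _ _ (mulr_linr (S (a * a')))) antiR.
by rewrite mulr_algr scalerA -scalerAl -scalerAr (klinearZ _ _ S_lin) (klinearZ _ _ S_lin) scalerA mulrC.
Qed.

Lemma S_mul (g h : H) : S (g * h) = S h * S g.
Proof. by rewrite -S_mul_Q2 -S_mul_Q S_mul_Q1. Qed.


Lemma epsD x y : eps (x + y) = eps x + eps y.
Proof. by have := eps_lin 1 x y; rewrite scale1r mul1r. Qed.
Lemma epsZ c x : eps (c *: x) = c * eps x.
Proof. by have := eps_lin c x 0; rewrite addr0 (addmorph0 epsD) addr0. Qed.

Lemma eps_S h : eps (S h) = eps h.
Proof.
have := congr1 eps (antiL h); rewrite epsZ eps_one mulr1 => <-.
rewrite -{1}(counitR h) !tliftE (add_sum _ _ (klinD S_lin)) !(add_sum _ _ epsD).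
by apply: eq_bigr => p _; rewrite (klinearZ _ _ S_lin) epsZ eps_mul mulrC.
Qed.

Section IndMod.
Variable M : rmod A.

Lemma ind_ax : rmod_axioms (fun (x : tensor_type H M) a => ind_act rho x a).
Proof.
split.
- exact: ind_act_linx.
- exact: ind_act_lina.
- exact: ind_act_assoc.
- exact: ind_act1.
Qed.

Definition indmod : rmod A := @RMod k A (tensor_type H M) _ ind_ax.

Definition coF (N : lmodType k) (h : H) (m : N) : tensor_type H (tensor_type H N) :=
  tlift (fun h1 h2 => tt h1 (tt h2 m)) (Delta h).

Lemma coF_in_bilin (N : lmodType k) (m : N) :
  kbilinear (fun h1 h2 : H => tt h1 (tt h2 m)).
Proof. by split => [h2|h1] c x y; [rewrite ttDl | rewrite ttDl ttDr]. Qed.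

Lemma coF_bilin (N : lmodType k) : kbilinear (@coF N).
Proof.
split => [m|h] c x y.
  by rewrite /coF Delta_lin (tlift_lin (coF_in_bilin m)).
apply: (klinear_param (F := fun z h1 h2 => tt h1 (tt h2 z))) => h1 h2 c' u v.
by rewrite !ttDr.
Qed.

Lemma ind_coactE (N : rmod A) (x : tensor_type H N) : ind_coact Delta x = tlift (@coF N) x.
Proof. by []. Qed.

Lemma ind_coact_lin (N : rmod A) : klinear (ind_coact Delta (M:=N)).
Proof. exact: tlift_lin (coF_bilin N). Qed.

Lemma coF_mul (N : lmodType k) h h' (n : N) :
  coF (h * h') n = tlift (fun u v => tlift (fun u' v' => tt (u * u') (tt (v * v') n)) (Delta h')) (Delta h).
Proof.
rewrite /coF Delta_mul /tmul (tlift_tlift _ _ (coF_in_bilin n)).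
apply: tlift_ext => u v; rewrite (tlift_tlift _ _ (coF_in_bilin n)).
by apply: tlift_ext => u' v'; rewrite (tlift_tt _ _ (coF_in_bilin n)).
Qed.

Lemma coact_ind_act x a :
  ind_coact Delta (ind_act rho x a) = ind_act rho (M := indmod) (ind_coact Delta x) a.
Proof.
rewrite (ind_actE x a) (tlift_pushL _ _ (ind_coact_lin (N:=M))).
rewrite ind_coactE (tlift_pushL _ _ (ind_act_linx (M:=indmod) a)).
apply: tlift_ext => h m.
rewrite indF_tlift (tlift_pushL _ _ (ind_coact_lin (N:=M))).
under tlift_ext do rewrite ind_coactE (tlift_tt _ _ (coF_bilin M)) coF_mul.
rewrite tlift_fubini /coF (tlift_pushL _ _ (ind_act_linx (M:=indmod) a)).
apply: tlift_ext => u v.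
rewrite (ind_act_tt (M:=indmod)) indF_tlift /=.
transitivity (tlift (fun g c => tlift (fun g' c' => tt (u * g) (tt (v * g') (rm_act m c'))) (rho c)) (rho a)); last first.
  apply: tlift_ext => g c; rewrite ind_act_tt indF_tlift (tlift_pushL _ _ (tt_linr _)).
  by [].
rewrite (rho_coass3 (T := fun g g' c' => tt (u * g) (tt (v * g') (rm_act m c')))) //.
  by move=> g; split => [c'|g'] z w w'; [rewrite mulrDr -scalerAr ttDl ttDr | rewrite actDr !ttDr].
by move=> g' c' z w w'; rewrite mulrDr -scalerAr ttDl.
Qed.

End IndMod.

Lemma coact_colin (M : rmod A) x :
  ind_coact Delta (M := indmod M) (ind_coact Delta x)
  = idtens (H:=H) (ind_coact Delta (M:=M)) (ind_coact Delta x).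
Proof.
rewrite [ind_coact Delta x]ind_coactE (tlift_pushL _ _ (ind_coact_lin (N:=indmod M))).
rewrite (tlift_pushL _ _ (idtens_lin (ind_coact_lin (N:=M)))).
apply: tlift_ext => h m.
rewrite {1}/coF (tlift_pushL _ _ (ind_coact_lin (N:=indmod M))).
rewrite /coF (tlift_pushL _ _ (idtens_lin (ind_coact_lin (N:=M)))).
under tlift_ext do rewrite ind_coactE (tlift_tt _ _ (coF_bilin _)).
under [RHS]tlift_ext do rewrite (idtens_tt (ind_coact_lin (N:=M))) ind_coactE
   (tlift_tt _ _ (coF_bilin _)) /coF (tlift_pushL _ _ (tt_linr _)).
rewrite (hopf_coass3 (T := fun c d b => tt c (tt d (tt b m)))) //.
  by move=> c; split => [b|d] z w w'; [rewrite ttDl ttDr | rewrite ttDl !ttDr].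
by move=> d b z w w'; rewrite ttDl.
Qed.

Lemma ind_hom_coact (M : rmod A) :
  ind_hom Delta rho (N := indmod M) (ind_coact Delta (M:=M)).
Proof.
split.
- exact: ind_coact_lin.
- by move=> x a; rewrite coact_ind_act.
- by move=> x; rewrite coact_colin.
Qed.

Lemma epsM_coact (M : rmod A) (x : tensor_type H M) :
  idtens (H:=H) (epsM (M:=M)) (ind_coact Delta x) = x.
Proof.
rewrite ind_coactE (tlift_pushL _ _ (idtens_lin (epsM_lin (M:=M)))).
rewrite -[RHS](tlift_tt_id x); apply: tlift_ext => h m.
rewrite /coF (tlift_pushL _ _ (idtens_lin (epsM_lin (M:=M)))).
under tlift_ext do rewrite (idtens_tt (epsM_lin (M:=M))) epsM_tt ttZr -ttZl.
by rewrite -(tlift_pushL _ _ (tt_linl _)) counitR.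
Qed.

Lemma coact_idtens (M N : rmod A) (g : M -> N) x : klinear g ->
  ind_coact Delta (idtens (H:=H) g x) = idtens (H:=H) (idtens (H:=H) g) (ind_coact Delta x).
Proof.
move=> hg.
rewrite {1}/idtens (tlift_pushL _ _ (ind_coact_lin (N:=N))).
rewrite ind_coactE (tlift_pushL _ _ (idtens_lin (idtens_lin hg))).
apply: tlift_ext => h m.
rewrite ind_coactE (tlift_tt _ _ (coF_bilin _)) /coF.
rewrite (tlift_pushL _ _ (idtens_lin (idtens_lin hg))).
by apply: tlift_ext => u v; rewrite (idtens_tt (idtens_lin hg)) (idtens_tt hg).
Qed.


Lemma mulr_linl' (z : A) : klinear (fun x : A => x * z).
Proof. by move=> c x y; rewrite mulrDl scalerAl. Qed.

Lemma MA_ax : @rmod_axioms k A A (fun m a => m * a).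
Proof.
split.
- by move=> a c x y; rewrite mulrDl scalerAl.
- by move=> m c x y; rewrite mulrDr scalerAr.
- by move=> m a b; rewrite mulrA.
- by move=> m; rewrite mulr1.
Qed.

Definition MA : rmod A := @RMod k A A _ MA_ax.

Lemma Kbil (U V : algType k) (u : U) (v : V) :
  kbilinear (fun (h : U) (c : V) => tt (u * h) (v * c)).
Proof.
by split => [c|h] z x y; rewrite mulrDr -scalerAr ?ttDl ?ttDr.
Qed.

Lemma Rbil (q : A) : kbilinear (fun (h : H) (c : A) => tt h (c * q)).
Proof. by split => [c|h] z x y; rewrite ?ttDl // mulrDl -scalerAl ttDr. Qed.

Lemma tmul_lin (w : tensor_type H A) : klinear (tmul w).
Proof.
apply: (klinear_param (F := fun z u v => tlift (fun h c => tt (u * h) (v * c)) z)) => u v.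
exact: tlift_lin (Kbil u v).
Qed.

Lemma tmul_R (w z : tensor_type H A) q :
  tlift (fun h c => tt h (c * q)) (tmul w z) = tmul w (tlift (fun h c => tt h (c * q)) z).
Proof.
rewrite /tmul (tlift_pushL _ _ (tlift_lin (Rbil q))).
apply: tlift_ext => u v.
rewrite (tlift_pushL _ _ (tlift_lin (Rbil q))) (tlift_tlift _ _ (Kbil u v)).
apply: tlift_ext => h c.
by rewrite (tlift_tt _ _ (Rbil q)) (tlift_tt _ _ (Kbil u v)) mulrA.
Qed.

Lemma Qbil (u : H) : kbilinear (fun (h : H) (b : A) => tt (u * S h) b).
Proof. by split => [b|h] z x y; [rewrite S_lin mulrDr -scalerAr ttDl | rewrite ttDr]. Qed.

Lemma Y1 (x : tensor_type H A) :
  (forall a, ind_act rho (M:=MA) x a = idtens (H:=H) (fun y : A => a * y) x) ->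
  forall a, tmul (rho a) (tlift (fun h b => tt (S h) b) x)
          = tlift (fun h c => tt h (c * a)) (tlift (fun h b => tt (S h) b) x).
Proof.
move=> C1 a.
have Sbil : kbilinear (fun (h : H) (b : A) => tt (S h) b).
  by split => [b|h] z u v; [rewrite S_lin ttDl | rewrite ttDr].
transitivity (tlift (fun u v => tlift (fun h b => tlift (fun g c => tt (u * S g * S h) (b * c)) (rho v)) x) (rho a)).
  rewrite /tmul; apply: tlift_ext => u v.
  rewrite (tlift_tlift _ _ (Kbil u v)).
  transitivity (tlift (fun h b => tt (u * S h) b) (idtens (H:=H) (fun y : A => v * y) x)).
    rewrite /idtens (tlift_tlift _ _ (Qbil u)); apply: tlift_ext => h b.
    by rewrite (tlift_tt _ _ (Kbil u v)) (tlift_tt _ _ (Qbil u)).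
  rewrite -C1 ind_actE (tlift_pushL _ _ (tlift_lin (Qbil u))).
  apply: tlift_ext => h b; rewrite indF_tlift (tlift_tlift _ _ (Qbil u)).
  by apply: tlift_ext => g c; rewrite (tlift_tt _ _ (Qbil u)) S_mul mulrA.
rewrite tlift_fubini (tlift_tlift _ _ (Rbil a)); apply: tlift_ext => h b.
rewrite (tlift_tt _ _ (Rbil a)).
rewrite (rho_coass3 (T := fun u g c => tt (u * S g * S h) (b * c))); first last.
- by move=> g c z u v; linsimp.
- by move=> u; split => [c|g] z w w'; linsimp.
transitivity (tlift (fun h' a' => tt (S h) (b * (eps h' *: a'))) (rho a)).
  apply: tlift_ext => h' a'.
  transitivity ((fun z => tt (z * S h) (b * a')) (tlift (fun u' v' => u' * S v') (Delta h'))).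
    rewrite (tlift_pushL (fun u' v' => u' * S v') _ (g := fun z => tt (z * S h) (b * a'))) //.
    by move=> z w w'; rewrite mulrDl -scalerAl ttDl.
  by rewrite /= antiR -scalerAl mul1r ttZl -ttZr -scalerAr.
rewrite -[in RHS](rho_counit a).
rewrite (tlift_pushL _ _ (g := fun z => tt (S h) (b * z))) //.
by move=> z w w'; rewrite mulrDr -scalerAr ttDr.
Qed.


Lemma idtens_id (N : lmodType k) : idtens (H:=H) (fun z : N => z) = (fun x => x).
Proof. by apply: funext => x; rewrite /idtens tlift_tt_id. Qed.

Lemma amod_id (M : rmod A) : amod_hom (fun z : M => z).
Proof. by []. Qed.

Lemma amod_epsM (M : rmod A) : amod_hom (M := indmod M) (N := M) (epsM (M:=M)).
Proof. by split; [exact: epsM_lin | move=> x a; rewrite /= epsM_ind_act]. Qed.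

Lemma amod_idtens (M N : rmod A) (g : M -> N) : amod_hom g ->
  amod_hom (M := indmod M) (N := indmod N) (idtens (H:=H) g).
Proof.
move=> hg; split; first by case: hg => hl _; exact: idtens_lin.
by move=> x a; rewrite /= idtens_ind_act.
Qed.

Lemma dir2 : hopf_galois rho -> ind_separable Delta rho -> separable_ext rho.
Proof.
move=> [hinj hsurj] [P [hP1 hP2 hP3]].
pose nu := P MA (indmod MA) (ind_coact Delta (M:=MA)).
have hnu : amod_hom nu := hP1 _ _ _ (ind_hom_coact MA).
have heps : forall m, epsM (nu m) = m.
  move=> m.
  have := hP3 MA MA (indmod MA) MA (fun z => z) (epsM (M:=MA)) (ind_coact Delta (M:=MA))
             (amod_id MA) (amod_epsM MA) (ind_hom_coact MA) m.
  rewrite idtens_id.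
  have -> : (fun x : tensor_type H MA => idtens (H:=H) (epsM (M:=MA)) (ind_coact Delta x))
            = idtens (H:=H) (fun z : MA => z).
    by rewrite idtens_id; apply: funext => x; rewrite epsM_coact.
  by rewrite hP2 //; exact: amod_id.
have hnat : forall (a m : A), nu (a * m) = idtens (H:=H) (fun y : A => a * y) (nu m).
  move=> a m.
  have ga : amod_hom (M:=MA) (N:=MA) (fun y : A => a * y).
    by split; [move=> c u v; rewrite mulrDr scalerAr | move=> u b; rewrite /= mulrA].
  have h1 := hP3 MA MA (indmod MA) (indmod MA) (fun z => z) (idtens (H:=H) (fun y : A => a * y))
             (ind_coact Delta (M:=MA)) (amod_id MA) (amod_idtens ga) (ind_hom_coact MA) m.
  have h2 := hP3 MA MA (indmod MA) (indmod MA) (fun y : A => a * y) (fun z => z)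
             (ind_coact Delta (M:=MA)) ga (amod_id _) (ind_hom_coact MA) m.
  rewrite idtens_id in h1; rewrite idtens_id in h2.
  rewrite -[LHS]h2 -[RHS]h1; congr (P _ _ _ _).
  by apply: funext => x; rewrite coact_idtens //; case: ga.
set x := nu 1.
have C1 : forall a, ind_act rho (M:=MA) x a = idtens (H:=H) (fun y : A => a * y) x.
  move=> a; case: hnu => _ hnua.
  have := hnua 1 a; rewrite /= mul1r => <-.
  by rewrite -hnat mulr1.
have C2 : epsM x = 1 by rewrite heps.
pose y := tlift (fun h b => tt (S h) b) x.
case: (hsurj y) => s hs.
exists s; split.
- move=> a; apply: hinj.
  rewrite /can_map !big_map /=.
  transitivity (tmul (rho a) (can_map rho s)).
    rewrite /can_map (add_sum _ _ (klinD (tmul_lin _))); apply: eq_bigr => p _.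
    by rewrite rho_mul tmul_R.
  have hY : tmul (rho a) y = tlift (fun h c => tt h (c * a)) y := Y1 C1 a.
  rewrite hs hY -hs /can_map (add_sum _ _ (klinD (tlift_lin (Rbil a)))).
  apply: eq_bigr => p _; rewrite (tlift_tlift _ _ (Rbil a)); apply: tlift_ext => h c.
  by rewrite (tlift_tt _ _ (Rbil a)) mulrA.
- have : epsM (can_map rho s) = 1.
    rewrite hs /y (tlift_pushL _ _ (epsM_lin (M:=A))) -C2; apply: tlift_ext => h b.
    by rewrite epsM_tt eps_S.
  rewrite /can_map (add_sum _ _ (klinD (epsM_lin (M:=A)))) => <-.
  apply: eq_bigr => p _.
  rewrite -{1}(rho_counit p.1) (tlift_pushL _ _ (mulr_linl' _)).
  rewrite (tlift_pushL _ _ (epsM_lin (M:=A))).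
  by apply: tlift_ext => h c; rewrite epsM_tt scalerAl.
Qed.

End Hopf2.
End Main.

Theorem theorem3p1p5 (k : comPzRingType) (H : algType k)
    (Delta : H -> tensor_type H H) (eps : H -> k) (S : H -> H)
    (A : algType k) (rho : A -> tensor_type H A) :
  is_hopf_algebra Delta eps S ->
  kflat H ->
  is_comodule_algebra Delta eps rho ->
  (separable_ext rho -> ind_separable Delta rho) /\
  (hopf_galois rho -> ind_separable Delta rho -> separable_ext rho).
Proof.
move=> [[Dl el Sl] coass [cL cR] [Dm D1 em e1] [aL aR]] _ [rl rcoass rcount rm r1].
split.
- exact: (dir1 Delta el em e1 rl rcount rm).
- exact: (dir2 el em e1 rl rcount rm r1 Dl Sl coass cL cR Dm aL aR rcoass).
Qed.
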